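(* Let $(\mathcal{S},\mathcal{R})$ be a complete positive presentation satisfying: (C) $\mathcal{R}$ contains no relation of the form $su=sv$ or $us=vs$ with $s\in\mathcal{S}$, $u,v\in\mathcal{S}^*$ and $u\neq v$; (E$_r$) there exists a set $\mathcal{S}'$ with $\mathcal{S}\subseteq\mathcal{S}'\subseteq\mathcal{S}^*$ such that for all $u,v\in\mathcal{S}'$ there exist $u',v'\in\mathcal{S}'$ satisfying $(uv')^{-1}(vu')\curvearrowright_r\varepsilon$. Then for every word $\mathbf{w}$ on $\mathcal{S}\cup\mathcal{S}^{-1}$ the following are equivalent: (i) $\mathbf{w}\equiv^{\pm}\varepsilon$; (ii) there exist $u,v\in\mathcal{S}^*$ with $\mathbf{w}\curvearrowright_r vu^{-1}$ and $u^{-1}v\curvearrowright_r\varepsilon$; (iii) there exist $u,v\in\mathcal{S}^*$ with $\mathbf{w}\curvearrowright_r vu^{-1}$ and $vu^{-1}\curvearrowright_l\varepsilon$.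
   Context: A positive presentation is a pair $(\mathcal{S},\mathcal{R})$ where $\mathcal{S}$ is a nonempty set of letters and $\mathcal{R}$ is a family of relations $u=v$, i.e. unordered pairs $\{u,v\}$ of nonempty words in the free monoid $\mathcal{S}^*$ (letters are regarded as length-one words). $\varepsilon$ denotes the empty word; $\equiv$ is the smallest congruence on $\mathcal{S}^*$ containing all pairs of $\mathcal{R}$. Let $\mathcal{S}^{-1}=\{s^{-1}:s\in\mathcal{S}\}$ be a disjoint copy of $\mathcal{S}$; $\equiv^{\pm}$ is the smallest congruence on $(\mathcal{S}\cup\mathcal{S}^{-1})^*$ containing all pairs of $\mathcal{R}$ and all pairs $\{ss^{-1},\varepsilon\}$, $\{s^{-1}s,\varepsilon\}$ for $s\in\mathcal{S}$. For $u\in\mathcal{S}^*$, $u^{-1}$ is obtained by reversing the order of the letters of $u$ and replacing each $s$ by $s^{-1}$. Right reversing: $\mathbf{w}\curvearrowright_r\mathbf{w}'$ (words on $\mathcal{S}\cup\mathcal{S}^{-1}$) if $\mathbf{w}'$ is obtained from $\mathbf{w}$ by finitely many steps, each deleting a subword $u^{-1}u$ ($u\in\mathcal{S}^*$ nonempty) or replacing a subword $u^{-1}v$ ($u,v\in\mathcal{S}^*$ nonempty) by $v'u'^{-1}$ where $uv'=vu'$ is a relation of $\mathcal{R}$. Left reversing: $\mathbf{w}\curvearrowright_l\mathbf{w}'$ if $\mathbf{w}'$ is obtained by finitely many steps, each deleting a subword $uu^{-1}$ ($u$ nonempty) or replacing a subword $uv^{-1}$ ($u,v$ nonempty) by $v'^{-1}u'$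 where $v'u=u'v$ is a relation of $\mathcal{R}$. $(\mathcal{S},\mathcal{R})$ is $r$-complete if for all $u,v,u',v'\in\mathcal{S}^*$ with $uv'\equiv vu'$ there exist $u'',v'',w\in\mathcal{S}^*$ with $u^{-1}v\curvearrowright_r v''u''^{-1}$, $u'\equiv u''w$, $v'\equiv v''w$; it is $l$-complete if for all $u,v,u',v'$ with $v'u\equiv u'v$ there exist $u'',v'',w$ with $uv^{-1}\curvearrowright_l v''^{-1}u''$, $u'\equiv wu''$, $v'\equiv wv''$; it is complete if it is both. *)

(* Defs.v *)
From Stdlib Require Import List Relations.
Import ListNotations.
Set Implicit Arguments.

Section Pres.
Variable S : Type.
(* A family of relations: R u v means the (unordered) relation u = v is in the family. *)
Variable R : list S -> list S -> Prop.

Definition isrel (u v : list S) : Prop := R u v \/ R v u.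

Inductive sletter : Type := Pos (s : S) | Neg (s : S).

Definition pos (u : list S) : list sletter := map Pos u.
Definition inv (u : list S) : list sletter := rev (map Neg u).

Inductive equiv : list S -> list S -> Prop :=
| eq_rel : forall a b u v, isrel u v -> equiv (a ++ u ++ b) (a ++ v ++ b)
| eq_refl : forall u, equiv u u
| eq_sym : forall u v, equiv u v -> equiv v u
| eq_trans : forall u v w, equiv u v -> equiv v w -> equiv u w.

Inductive equivpm : list sletter -> list sletter -> Prop :=
| eqpm_rel : forall a b u v, isrel u v -> equivpm (a ++ pos u ++ b) (a ++ pos v ++ b)
| eqpm_cancel1 : forall a b s, equivpm (a ++ [Pos s; Neg s] ++ b) (a ++ b)
| eqpm_cancel2 : forall a b s, equivpm (a ++ [Neg s; Pos s] ++ b) (a ++ b)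
| eqpm_refl : forall w, equivpm w w
| eqpm_sym : forall w w', equivpm w w' -> equivpm w' w
| eqpm_trans : forall w1 w2 w3, equivpm w1 w2 -> equivpm w2 w3 -> equivpm w1 w3.

Inductive rstep : list sletter -> list sletter -> Prop :=
| rs_del : forall a b u, u <> [] -> rstep (a ++ inv u ++ pos u ++ b) (a ++ b)
| rs_rel : forall a b u v u' v', u <> [] -> v <> [] -> isrel (u ++ v') (v ++ u') ->
    rstep (a ++ inv u ++ pos v ++ b) (a ++ pos v' ++ inv u' ++ b).

Inductive lstep : list sletter -> list sletter -> Prop :=
| ls_del : forall a b u, u <> [] -> lstep (a ++ pos u ++ inv u ++ b) (a ++ b)
| ls_rel : forall a b u v u' v', u <> [] -> v <> [] -> isrel (v' ++ u) (u' ++ v) ->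
    lstep (a ++ pos u ++ inv v ++ b) (a ++ inv v' ++ pos u' ++ b).

Definition rrev : list sletter -> list sletter -> Prop := clos_refl_trans _ rstep.
Definition lrev : list sletter -> list sletter -> Prop := clos_refl_trans _ lstep.

Definition r_complete : Prop :=
  forall u v u' v', equiv (u ++ v') (v ++ u') ->
    exists u'' v'' w, rrev (inv u ++ pos v) (pos v'' ++ inv u'')
      /\ equiv u' (u'' ++ w) /\ equiv v' (v'' ++ w).

Definition l_complete : Prop :=
  forall u v u' v', equiv (v' ++ u) (u' ++ v) ->
    exists u'' v'' w, lrev (pos u ++ inv v) (inv v'' ++ pos u'')
      /\ equiv u' (w ++ u'') /\ equiv v' (w ++ v'').

Definition complete : Prop := r_complete /\ l_complete.

Definition cond_C : Prop :=
  (forall s u v, isrel (s :: u) (s :: v) -> u = v) /\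
  (forall s u v, isrel (u ++ [s]) (v ++ [s]) -> u = v).

Definition cond_Er : Prop :=
  exists S' : list S -> Prop, (forall s, S' [s]) /\
    forall u v, S' u -> S' v -> exists u' v', S' u' /\ S' v' /\
      rrev (inv (u ++ v') ++ pos (v ++ u')) [].

End Pres.

Definition positive_presentation (S : Type) (R : list S -> list S -> Prop) : Prop :=
  inhabited S /\ forall u v, R u v -> u <> [] /\ v <> [].

(* Main.v *)
Require Import Defs.
From Stdlib Require Import List Relations Lia.
Import ListNotations.

Section Main.
Variable S : Type.
Variable R : list S -> list S -> Prop.
Local Notation E := (Defs.equiv R).
Local Notation L := (list (sletter S)).

Lemma E_refl x : E x x. Proof. apply eq_refl. Qed.
Lemma E_sym x y : E x y -> E y x. Proof. apply eq_sym. Qed.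
Lemma E_trans x y z : E x y -> E y z -> E x z. Proof. apply eq_trans. Qed.

Lemma E_app_l a x y : E x y -> E (a ++ x) (a ++ y).
Proof.
  induction 1.
  - pose proof (eq_rel (a ++ a0) b H) as H'. rewrite <- !app_assoc in *. exact H'.
  - apply E_refl.
  - apply E_sym; auto.
  - eapply E_trans; eauto.
Qed.

Lemma E_app_r b0 x y : E x y -> E (x ++ b0) (y ++ b0).
Proof.
  induction 1.
  - pose proof (eq_rel a (b ++ b0) H) as H'. rewrite <- !app_assoc in *. exact H'.
  - apply E_refl.
  - apply E_sym; auto.
  - eapply E_trans; eauto.
Qed.

Lemma E_app x x' y y' : E x x' -> E y y' -> E (x ++ y) (x' ++ y').
Proof. intros. eapply E_trans. apply E_app_r; eauto. apply E_app_l; auto. Qed.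

Lemma E_isrel u v : isrel R u v -> E u v.
Proof. intros H. pose proof (eq_rel [] [] H) as H'. simpl in H'. rewrite !app_nil_r in H'. exact H'. Qed.

Lemma E_nil_gen x y : positive_presentation R -> E x y -> (x = [] <-> y = []).
Proof.
  intros [_ HP]. induction 1.
  - assert (u <> [] /\ v <> []) as [Hu Hv].
    { destruct H as [H|H]; apply HP in H; tauto. }
    split; intro Hn; apply app_eq_nil in Hn as [_ Hn]; apply app_eq_nil in Hn as [Hn _]; tauto.
  - tauto.
  - tauto.
  - tauto.
Qed.

Lemma E_nil x : positive_presentation R -> E [] x -> x = [].
Proof. intros HP H. apply (E_nil_gen _ _ HP) in H. tauto. Qed.

Local Notation EP := (equivpm R).

Lemma EP_eq x y x' y' : x = x' -> y = y' -> EP x' y' -> EP x y.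
Proof. intros -> ->; auto. Qed.

Lemma pos_app (u v : list S) : pos (u ++ v) = pos u ++ pos v.
Proof. unfold pos. apply map_app. Qed.
Lemma inv_app (u v : list S) : inv (u ++ v) = inv v ++ inv u.
Proof. unfold inv. rewrite map_app, rev_app_distr. reflexivity. Qed.
Lemma inv_cons s (u : list S) : inv (s :: u) = inv u ++ [Neg s].
Proof. reflexivity. Qed.

Lemma EP_PN u : forall a b, EP (a ++ pos u ++ inv u ++ b) (a ++ b).
Proof.
  induction u as [|s u IH]; intros a b.
  - apply eqpm_refl.
  - eapply eqpm_trans.
    + apply EP_eq with (x' := (a ++ [Pos s]) ++ pos u ++ inv u ++ ([Neg s] ++ b))
        (y' := (a ++ [Pos s]) ++ ([Neg s] ++ b)); [|reflexivity|apply IH].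
      rewrite inv_cons. simpl. rewrite <- !app_assoc. reflexivity.
    + rewrite <- app_assoc. simpl. apply eqpm_cancel1.
Qed.

Lemma EP_NP u : forall a b, EP (a ++ inv u ++ pos u ++ b) (a ++ b).
Proof.
  induction u as [|s u IH]; intros a b.
  - apply eqpm_refl.
  - eapply eqpm_trans; [|apply (IH a b)].
    apply EP_eq with (x' := (a ++ inv u) ++ [Neg s; Pos s] ++ (pos u ++ b))
      (y' := (a ++ inv u) ++ (pos u ++ b)).
    + rewrite inv_cons. simpl. rewrite <- !app_assoc. reflexivity.
    + rewrite <- !app_assoc. reflexivity.
    + apply eqpm_cancel2.
Qed.

Lemma EP_E a b u v : E u v -> EP (a ++ pos u ++ b) (a ++ pos v ++ b).
Proof.
  intros H. revert a b. induction H; intros a0 b0.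
  - rewrite !pos_app. 
    apply EP_eq with (x' := (a0 ++ pos a) ++ pos u ++ (pos b ++ b0))
      (y' := (a0 ++ pos a) ++ pos v ++ (pos b ++ b0)); try (rewrite <- !app_assoc; reflexivity).
    apply eqpm_rel; auto.
  - apply eqpm_refl.
  - apply eqpm_sym; auto.
  - eapply eqpm_trans; eauto.
Qed.

Lemma rstep_EP w w' : rstep R w w' -> EP w w'.
Proof.
  destruct 1 as [a b u Hu | a b u v u' v' Hu Hv Hr].
  - apply EP_NP.
  - eapply eqpm_trans.
    { apply eqpm_sym. apply EP_eq with (x' := (a ++ inv u ++ pos v) ++ pos u' ++ inv u' ++ b)
        (y' := (a ++ inv u ++ pos v) ++ b); [|rewrite <- !app_assoc; reflexivity|apply EP_PN].
      reflexivity. }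
    eapply eqpm_trans.
    { apply EP_eq with (x' := (a ++ inv u) ++ pos (v ++ u') ++ (inv u' ++ b))
        (y' := (a ++ inv u) ++ pos (u ++ v') ++ (inv u' ++ b)); [| reflexivity |].
      - rewrite pos_app. rewrite <- !app_assoc. reflexivity.
      - apply EP_E. apply E_sym, E_isrel; auto. }
    rewrite pos_app. rewrite <- !app_assoc. apply EP_NP.
Qed.

Lemma lstep_EP w w' : lstep R w w' -> EP w w'.
Proof.
  destruct 1 as [a b u Hu | a b u v u' v' Hu Hv Hr].
  - apply EP_PN.
  - eapply eqpm_trans.
    { apply eqpm_sym. apply EP_eq with (x' := a ++ inv v' ++ pos v' ++ (pos u ++ inv v ++ b))
        (y' := a ++ (pos u ++ inv v ++ b)); [|reflexivity|apply EP_NP].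
      reflexivity. }
    eapply eqpm_trans.
    { apply EP_eq with (x' := (a ++ inv v') ++ pos (v' ++ u) ++ (inv v ++ b))
        (y' := (a ++ inv v') ++ pos (u' ++ v) ++ (inv v ++ b)); [| reflexivity |].
      - rewrite pos_app. rewrite <- !app_assoc. reflexivity.
      - apply EP_E. apply E_isrel; auto. }
    rewrite pos_app.
    apply EP_eq with (x' := (a ++ inv v' ++ pos u') ++ pos v ++ inv v ++ b)
        (y' := (a ++ inv v' ++ pos u') ++ b); try (rewrite <- !app_assoc; reflexivity).
    apply EP_PN.
Qed.

Lemma rrev_EP w w' : rrev R w w' -> EP w w'.
Proof.
  induction 1. apply rstep_EP; auto. apply eqpm_refl. eapply eqpm_trans; eauto.
Qed.

Lemma lrev_EP w w' : lrev R w w' -> EP w w'.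
Proof.
  induction 1. apply lstep_EP; auto. apply eqpm_refl. eapply eqpm_trans; eauto.
Qed.


Fixpoint Rel (w : L) (x y : list S) : Prop :=
  match w with
  | [] => E x y
  | Pos s :: w' => Rel w' (x ++ [s]) y
  | Neg s :: w' => exists z, E x (z ++ [s]) /\ Rel w' z y
  end.

Lemma RelL w : forall x x' y, E x x' -> Rel w x y -> Rel w x' y.
Proof.
  induction w as [|[s|s] w IH]; simpl; intros x x' y Hx H.
  - eapply E_trans; [apply E_sym|]; eauto.
  - eapply IH; [|eauto]. apply E_app_r; auto.
  - destruct H as [z [Hz H]]. exists z; split; auto. eapply E_trans; [apply E_sym|]; eauto.
Qed.

Lemma Rel_app w1 w2 : forall x y, Rel (w1 ++ w2) x y <-> exists m, Rel w1 x m /\ Rel w2 m y.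
Proof.
  induction w1 as [|[s|s] w IH]; simpl; intros x y.
  - split.
    + intros H. exists x. split; auto. apply E_refl.
    + intros [m [Hm H]]. eapply RelL; [apply E_sym|]; eauto.
  - apply IH.
  - split.
    + intros [z [Hz H]]. apply IH in H as [m [H1 H2]]. exists m; split; eauto.
    + intros [m [[z [Hz H1]] H2]]. exists z; split; auto. apply IH; eauto.
Qed.

Lemma Rel_pos u : forall x y, Rel (pos u) x y <-> E (x ++ u) y.
Proof.
  induction u as [|s u IH]; simpl; intros x y.
  - rewrite app_nil_r. tauto.
  - rewrite IH. rewrite <- app_assoc. simpl. tauto.
Qed.

Lemma Rel_inv u : forall x y, Rel (inv u) x y <-> E x (y ++ u).
Proof.
  induction u as [|s u IH]; intros x y.
  - simpl. rewrite app_nil_r. tauto.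
  - rewrite inv_cons, Rel_app. split.
    + intros [m [H1 H2]]. apply IH in H1. simpl in H2.
      destruct H2 as [z [Hz Hzy]].
      eapply E_trans; [apply H1|]. 
      replace (y ++ s :: u) with ((y ++ [s]) ++ u) by (rewrite <- app_assoc; reflexivity).
      apply E_app_r. eapply E_trans; [apply Hz|]. apply E_app_r; auto.
    + intros H. exists (y ++ [s]). split.
      * apply IH. rewrite <- app_assoc. exact H.
      * simpl. exists y. split; apply E_refl.
Qed.

Lemma rstep_Rel w w' : rstep R w w' -> forall x y, Rel w x y -> Rel w' x y.
Proof.
  destruct 1 as [a b u Hu | a b u v u' v' Hu Hv Hr]; intros x y H.
  - apply Rel_app in H as [m1 [Ha H]].
    apply Rel_app in H as [m2 [Hi H]].
    apply Rel_app in H as [m3 [Hp Hb]].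
    apply Rel_inv in Hi. apply Rel_pos in Hp.
    apply Rel_app. exists m1. split; auto. eapply RelL; [|eauto].
    eapply E_trans; [apply E_sym, Hp|]. apply E_sym; auto.
  - apply Rel_app in H as [m1 [Ha H]].
    apply Rel_app in H as [m2 [Hi H]].
    apply Rel_app in H as [m3 [Hp Hb]].
    apply Rel_inv in Hi. apply Rel_pos in Hp.
    apply Rel_app. exists m1. split; auto.
    apply Rel_app. exists (m1 ++ v'). split; [apply Rel_pos, E_refl|].
    apply Rel_app. exists m3. split; auto.
    apply Rel_inv.
    eapply E_trans. apply E_app_r, Hi. rewrite <- app_assoc.
    eapply E_trans. apply E_app_l, E_isrel, Hr. rewrite app_assoc.
    apply E_app_r; auto.
Qed.

Lemma rrev_Rel w w' : rrev R w w' -> forall x y, Rel w x y -> Rel w' x y.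
Proof.
  induction 1; intros; eauto using rstep_Rel.
Qed.

Lemma rrev_nil_E a b : rrev R (inv a ++ pos b) [] -> E a b.
Proof.
  intros H. apply (rrev_Rel _ _ H a b). apply Rel_app. exists []. split.
  - apply Rel_inv. apply E_refl.
  - apply Rel_pos. apply E_refl.
Qed.


Lemma no_adj {T} (P Q : T -> Prop) A : forall B l1 x y l2, Forall P A -> Forall Q B -> ~P x -> ~Q y ->
  A ++ B <> l1 ++ x :: y :: l2.
Proof.
  induction A as [|a A IH]; intros B l1 x y l2 HA HB Hx Hy Heq; simpl in Heq.
  - subst B. apply Forall_app in HB as [_ HB]. inversion HB; subst. inversion H2; subst. auto.
  - inversion HA; subst. destruct l1 as [|c l1]; simpl in Heq; injection Heq; intros; subst.
    + auto.
    + eapply IH; eauto.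
Qed.

Lemma split_uniq {T} (P : T -> Prop) A : forall B C D, Forall P A -> Forall P C ->
  Forall (fun z => ~ P z) B -> Forall (fun z => ~ P z) D -> A ++ B = C ++ D -> A = C /\ B = D.
Proof.
  induction A as [|a A IH]; intros B C D HA HC HB HD Heq.
  - destruct C as [|c C]; simpl in Heq; auto.
    subst B. inversion HB; inversion HC; subst. contradiction.
  - destruct C as [|c C]; simpl in Heq.
    + subst D. inversion HD; inversion HA; subst. contradiction.
    + injection Heq; intros Heq' ->. inversion HA; inversion HC; subst.
      destruct (IH B C D) as [-> ->]; auto.
Qed.

Definition isPos (z : sletter S) : Prop := exists s, z = Pos s.

Lemma Forall_pos (u : list S) : Forall isPos (pos u).
Proof. induction u; constructor; eauto. exists a; auto. Qed.

Lemma Forall_inv (u : list S) : Forall (fun z => ~ isPos z) (inv u).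
Proof.
  induction u as [|s u IH]; [constructor|]. rewrite inv_cons. apply Forall_app; split; auto.
  constructor; [|constructor]. intros [t Ht]; discriminate.
Qed.

Lemma Forall_inv' (u : list S) : Forall (fun z => ~ ~ isPos z) (pos u).
Proof. induction u; constructor; eauto. intros H; apply H. exists a; auto. Qed.

Lemma pos_inj (u v : list S) : pos u = pos v -> u = v.
Proof.
  revert v; induction u as [|a u IH]; intros [|b v] H; simpl in H; try discriminate; auto.
  injection H; intros; subst. f_equal; auto.
Qed.

Lemma inv_inj (u v : list S) : inv u = inv v -> u = v.
Proof.
  unfold inv. intros H. apply (f_equal (@rev _)) in H. rewrite !rev_involutive in H.
  revert v H; induction u as [|a u IH]; intros [|b v] H; simpl in H; try discriminate; auto.
  injection H; intros; subst. f_equal; auto.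
Qed.

Lemma PI_uniq (v u v' u' : list S) : pos v ++ inv u = pos v' ++ inv u' -> v = v' /\ u = u'.
Proof.
  intros H. apply split_uniq with (P := isPos) in H as [H1 H2];
    auto using Forall_pos, Forall_inv, pos_inj, inv_inj.
Qed.

Lemma IP_uniq (v u v' u' : list S) : inv v ++ pos u = inv v' ++ pos u' -> v = v' /\ u = u'.
Proof.
  intros H. apply split_uniq with (P := fun z => ~ isPos z) in H as [H1 H2];
    auto using Forall_pos, Forall_inv, Forall_inv', pos_inj, inv_inj.
Qed.

Lemma last_split (u : list S) : u <> [] -> exists u1 t, u = u1 ++ [t].
Proof.
  intros H. destruct (exists_last H) as [u1 [t ->]]. eauto.
Qed.

Lemma rstep_irred (v u : list S) w' : rstep R (pos v ++ inv u) w' -> False.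
Proof.
  intros H. remember (pos v ++ inv u) as w0. destruct H as [a b u0 Hu | a b u0 v0 u' v' Hu Hv Hr].
  - destruct u0 as [|t u1]; [congruence|].
    rewrite inv_cons in Heqw0. simpl in Heqw0.
    apply (no_adj isPos (fun z => ~ isPos z) (pos v) (inv u) (a ++ inv u1) (Neg t) (Pos t) (pos u1 ++ b));
      auto using Forall_pos, Forall_inv.
    + intros [q Hq]; discriminate.
    + intros Hn; apply Hn; exists t; auto.
    + rewrite <- Heqw0. rewrite <- !app_assoc. reflexivity.
  - destruct u0 as [|t u1]; [congruence|]. destruct v0 as [|t' v1]; [congruence|].
    rewrite inv_cons in Heqw0. simpl in Heqw0.
    apply (no_adj isPos (fun z => ~ isPos z) (pos v) (inv u) (a ++ inv u1) (Neg t) (Pos t') (pos v1 ++ b));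
      auto using Forall_pos, Forall_inv.
    + intros [q Hq]; discriminate.
    + intros Hn; apply Hn; exists t'; auto.
    + rewrite <- Heqw0. rewrite <- !app_assoc. reflexivity.
Qed.

Lemma pos_snoc (u : list S) t : pos (u ++ [t]) = pos u ++ [Pos t].
Proof. rewrite pos_app. reflexivity. Qed.
Lemma inv_snoc (u : list S) t : inv (u ++ [t]) = Neg t :: inv u.
Proof. rewrite inv_app. reflexivity. Qed.

Lemma lstep_irred (v u : list S) w' : lstep R (inv v ++ pos u) w' -> False.
Proof.
  intros H. remember (inv v ++ pos u) as w0. destruct H as [a b u0 Hu | a b u0 v0 u' v' Hu Hv Hr].
  - destruct (last_split u0 Hu) as [u1 [t ->]].
    rewrite pos_snoc, inv_snoc in Heqw0.
    apply (no_adj (fun z => ~ isPos z) (fun z => ~ ~ isPos z) (inv v) (pos u) (a ++ pos u1) (Pos t) (Neg t) (inv u1 ++ b));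
      auto using Forall_inv', Forall_inv.
    + intros Hn; apply Hn; exists t; auto.
    + intros Hn; apply Hn. intros [q Hq]; discriminate.
    + rewrite <- Heqw0. rewrite <- !app_assoc. reflexivity.
  - destruct (last_split u0 Hu) as [u1 [t ->]]. destruct (last_split v0 Hv) as [v1 [t' ->]].
    rewrite pos_snoc, inv_snoc in Heqw0.
    apply (no_adj (fun z => ~ isPos z) (fun z => ~ ~ isPos z) (inv v) (pos u) (a ++ pos u1) (Pos t) (Neg t') (inv v1 ++ b));
      auto using Forall_inv', Forall_inv.
    + intros Hn; apply Hn; exists t; auto.
    + intros Hn; apply Hn. intros [q Hq]; discriminate.
    + rewrite <- Heqw0. rewrite <- !app_assoc. reflexivity.
Qed.

Lemma len_pos (u : list S) : length (pos u) = length u. Proof. apply length_map. Qed.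
Lemma len_inv (u : list S) : length (inv u) = length u. Proof. unfold inv. rewrite length_rev. apply length_map. Qed.

Lemma decomp2 (f g : list S -> L) a b u v x y :
  (forall z, length (f z) = length z) -> (forall z, length (g z) = length z) ->
  u <> [] -> v <> [] -> a ++ f u ++ g v ++ b = [x; y] ->
  a = [] /\ b = [] /\ exists t t', u = [t] /\ v = [t'].
Proof.
  intros Hf Hg Hu Hv H. pose proof (f_equal (@length _) H) as Hl.
  rewrite !length_app, Hf, Hg in Hl. simpl in Hl.
  destruct a; [|simpl in Hl; destruct u; [congruence|]; destruct v; [congruence|]; simpl in Hl; lia].
  destruct b; [|simpl in Hl; destruct u; [congruence|]; destruct v; [congruence|]; simpl in Hl; lia].
  destruct u as [|t [|]]; [congruence| |simpl in Hl; destruct v; [congruence|]; simpl in Hl; lia].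
  destruct v as [|t' [|]]; [congruence| |simpl in Hl; lia].
  repeat split; eauto.
Qed.

Lemma rrev_irred (v u : list S) w : rrev R (pos v ++ inv u) w -> w = pos v ++ inv u.
Proof.
  intros H. apply clos_rt_rt1n in H. inversion H; subst; auto.
  exfalso; eapply rstep_irred; eauto.
Qed.

Lemma lrev_irred (v u : list S) w : lrev R (inv v ++ pos u) w -> w = inv v ++ pos u.
Proof.
  intros H. apply clos_rt_rt1n in H. inversion H; subst; auto.
  exfalso; eapply lstep_irred; eauto.
Qed.

Lemma rrev_NP (HC : cond_C R) s (v u : list S) : rrev R [Neg s; Pos s] (pos v ++ inv u) -> v = u.
Proof.
  intros H. apply clos_rt_rt1n in H. inversion H as [Heq|w1 w2 Hs Hr]; subst.
  - exfalso. apply (no_adj isPos (fun z => ~ isPos z) (pos v) (inv u) [] (Neg s) (Pos s) []);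
      auto using Forall_pos, Forall_inv.
    + intros [q Hq]; discriminate.
    + intros Hn; apply Hn; exists s; auto.
  - apply clos_rt1n_rt in Hr.
    remember [Neg s; Pos s] as w0. destruct Hs as [a b u0 Hu | a b u0 v0 u' v' Hu Hv Hrl].
    + destruct (decomp2 (@inv S) (@pos S) a b u0 u0 (Neg s) (Pos s) len_inv len_pos Hu Hu Heqw0)
        as [-> [-> [t [t' [-> _]]]]].
      simpl in Hr. apply (rrev_irred [] []) in Hr.
      apply PI_uniq in Hr as [-> ->]. auto.
    + destruct (decomp2 (@inv S) (@pos S) a b u0 v0 (Neg s) (Pos s) len_inv len_pos Hu Hv Heqw0)
        as [-> [-> [t [t' [-> ->]]]]].
      simpl in Heqw0. injection Heqw0; intros -> ->.
      destruct HC as [HC1 _]. apply HC1 in Hrl. subst.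
      rewrite app_nil_r in Hr. apply rrev_irred in Hr.
      apply PI_uniq in Hr as [-> ->]. auto.
Qed.


Lemma lrev_PN (HC : cond_C R) s (v u : list S) : lrev R [Pos s; Neg s] (inv v ++ pos u) -> v = u.
Proof.
  intros H. apply clos_rt_rt1n in H. inversion H as [Heq|w1 w2 Hs Hr]; subst.
  - exfalso. apply (no_adj (fun z => ~ isPos z) (fun z => ~ ~ isPos z) (inv v) (pos u) [] (Pos s) (Neg s) []);
      auto using Forall_inv', Forall_inv.
    + intros Hn; apply Hn; exists s; auto.
    + intros Hn; apply Hn. intros [q Hq]; discriminate.
  - apply clos_rt1n_rt in Hr.
    remember [Pos s; Neg s] as w0. destruct Hs as [a b u0 Hu | a b u0 v0 u' v' Hu Hv Hrl].
    + destruct (decomp2 (@pos S) (@inv S) a b u0 u0 (Pos s) (Neg s) len_pos len_inv Hu Hu Heqw0)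
        as [-> [-> [t [t' [-> _]]]]].
      simpl in Hr. apply (lrev_irred [] []) in Hr.
      apply IP_uniq in Hr as [-> ->]. auto.
    + destruct (decomp2 (@pos S) (@inv S) a b u0 v0 (Pos s) (Neg s) len_pos len_inv Hu Hv Heqw0)
        as [-> [-> [t [t' [-> ->]]]]].
      simpl in Heqw0. injection Heqw0; intros -> ->.
      destruct HC as [_ HC2]. apply HC2 in Hrl. subst.
      rewrite app_nil_r in Hr. apply lrev_irred in Hr.
      apply IP_uniq in Hr as [-> ->]. auto.
Qed.

Lemma lcancel (HC : cond_C R) (Hc : r_complete R) a : forall x y, E (a ++ x) (a ++ y) -> E x y.
Proof.
  induction a as [|s a IH]; intros x y H; auto.
  apply IH. simpl in H.
  destruct (Hc [s] [s] (a ++ y) (a ++ x) H) as [u'' [v'' [w [Hr [H1 H2]]]]].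
  apply rrev_NP in Hr; auto. subst.
  eapply E_trans; [apply H2|]. apply E_sym; auto.
Qed.

Lemma rcancel (HC : cond_C R) (Hc : l_complete R) a : forall x y, E (x ++ a) (y ++ a) -> E x y.
Proof.
  induction a as [|s a IH]; intros x y H.
  - rewrite !app_nil_r in H; auto.
  - replace (x ++ s :: a) with ((x ++ [s]) ++ a) in H by (rewrite <- app_assoc; reflexivity).
    replace (y ++ s :: a) with ((y ++ [s]) ++ a) in H by (rewrite <- app_assoc; reflexivity).
    apply IH in H.
    destruct (Hc [s] [s] y x H) as [u'' [v'' [w [Hr [H1 H2]]]]].
    apply lrev_PN in Hr; auto. subst.
    eapply E_trans; [apply H2|]. apply E_sym; auto.
Qed.

Lemma crm1 (P : list S -> Prop)
  (HE : forall u v, P u -> P v -> exists u' v', P u' /\ P v' /\ E (u ++ v') (v ++ u')) :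
  forall B, Forall P B -> forall u, P u -> exists X Y, E (u ++ X) (concat B ++ Y).
Proof.
  induction B as [|v B IH]; intros HB u Hu.
  - exists [], u. simpl. rewrite app_nil_r. apply E_refl.
  - inversion HB; subst.
    destruct (HE u v Hu H1) as [u' [v' [Hu' [Hv' He]]]].
    destruct (IH H2 u' Hu') as [X [Y H]].
    exists (v' ++ X), Y. simpl.
    rewrite app_assoc. eapply E_trans. apply E_app_r, He.
    rewrite <- !app_assoc. apply E_app_l. auto.
Qed.

Lemma crm2 (P : list S -> Prop)
  (HE : forall u v, P u -> P v -> exists u' v', P u' /\ P v' /\ E (u ++ v') (v ++ u'))
  (H1 : forall s, P [s]) :
  forall A, Forall P A -> forall b, exists X Y, E (concat A ++ X) (b ++ Y).
Proof.
  induction A as [|u A IH]; intros HA b.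
  - exists b, []. simpl. rewrite app_nil_r. apply E_refl.
  - inversion HA; subst.
    assert (Hb : Forall P (map (fun s => [s]) b)) by (apply Forall_map, Forall_forall; auto).
    destruct (crm1 P HE _ Hb u H2) as [X1 [Y1 Hx]].
    destruct (IH H3 X1) as [X2 [Y2 Hy]].
    exists X2, (Y1 ++ Y2). simpl. rewrite <- app_assoc.
    eapply E_trans. apply E_app_l, Hy. rewrite app_assoc.
    eapply E_trans. apply E_app_r, Hx.
    replace (concat (map (fun s : S => [s]) b)) with b.
    + rewrite <- app_assoc. apply E_refl.
    + clear. induction b; simpl; f_equal; auto.
Qed.

Lemma crm (HEr : cond_Er R) a b : exists X Y, E (a ++ X) (b ++ Y).
Proof.
  destruct HEr as [P [H1 HE]].
  assert (HE' : forall u v, P u -> P v -> exists u' v', P u' /\ P v' /\ E (u ++ v') (v ++ u')).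
  { intros u v Hu Hv. destruct (HE u v Hu Hv) as [u' [v' [Hu' [Hv' Hr]]]].
    exists u', v'. repeat split; auto. apply rrev_nil_E; auto. }
  assert (Ha : Forall P (map (fun s => [s]) a)) by (apply Forall_map, Forall_forall; auto).
  destruct (crm2 P HE' H1 _ Ha b) as [X [Y H]].
  exists X, Y. replace a with (concat (map (fun s : S => [s]) a)); auto.
  clear. induction a; simpl; f_equal; auto.
Qed.

Lemma rrev_ctx a b w w' : rrev R w w' -> rrev R (a ++ w ++ b) (a ++ w' ++ b).
Proof.
  induction 1.
  - apply rt_step. destruct H as [a0 b0 u Hu | a0 b0 u v u' v' Hu Hv Hr].
    + pose proof (@rs_del S R (a ++ a0) (b0 ++ b) u Hu) as H. rewrite <- !app_assoc in *. exact H.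
    + pose proof (rs_rel (a ++ a0) (b0 ++ b) u' v' Hu Hv Hr) as H. rewrite <- !app_assoc in *. exact H.
  - apply rt_refl.
  - eapply rt_trans; eauto.
Qed.

Lemma termination (HEr : cond_Er R) (Hc : r_complete R) w : exists u v, rrev R w (pos v ++ inv u).
Proof.
  induction w as [|[s|s] w [u [v IH]]].
  - exists [], []. apply rt_refl.
  - exists u, (s :: v). apply (rrev_ctx [Pos s] []) in IH. rewrite !app_nil_r in IH. exact IH.
  - destruct (crm HEr [s] v) as [X [Y H]].
    destruct (Hc [s] v Y X H) as [u'' [v'' [w0 [Hr _]]]].
    exists (u ++ u''), v''.
    pose proof (rrev_ctx [Neg s] [] _ _ IH) as IH'. rewrite !app_nil_r in IH'.
    eapply rt_trans. apply IH'.
    apply (rrev_ctx [] (inv u)) in Hr. simpl in Hr.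
    rewrite inv_app. rewrite <- app_assoc in Hr. exact Hr.
Qed.


Definition fe (x y : list S * list S) : Prop :=
  exists a b, E (fst x ++ a) (fst y ++ b) /\ E (snd x ++ a) (snd y ++ b).

Fixpoint act (c : list S -> list S -> list S * list S) (w : L) (x : list S * list S) : list S * list S :=
  match w with
  | [] => x
  | Pos s :: w' => (s :: fst (act c w' x), snd (act c w' x))
  | Neg s :: w' => (fst (c [s] (fst (act c w' x))), snd (act c w' x) ++ snd (c [s] (fst (act c w' x))))
  end.

Lemma E_assoc_l a b d y : E (a ++ b ++ d) y -> E ((a ++ b) ++ d) y.
Proof. rewrite <- app_assoc. auto. Qed.

Ltac norm := repeat rewrite <- app_assoc in *; simpl in *.

Lemma fe_refl x : fe x x.
Proof. exists [], []. split; apply E_refl. Qed.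
Lemma fe_sym x y : fe x y -> fe y x.
Proof. intros [a [b [H1 H2]]]. exists b, a. split; apply E_sym; auto. Qed.

Section Act.
Variable c : list S -> list S -> list S * list S.
Hypothesis Hc : forall a b, E (a ++ fst (c a b)) (b ++ snd (c a b)).
Hypothesis HL : forall a x y, E (a ++ x) (a ++ y) -> E x y.

Lemma fe_trans x y z : fe x y -> fe y z -> fe x z.
Proof.
  intros [a [b [H1 H2]]] [d [e [H3 H4]]].
  pose proof (Hc b d) as Hm. set (m := fst (c b d)) in *. set (n := snd (c b d)) in *.
  exists (a ++ m), (e ++ n). split.
  - eapply E_trans. rewrite app_assoc. apply E_app_r, H1. norm.
    eapply E_trans. apply E_app_l, Hm. rewrite app_assoc.
    eapply E_trans. apply E_app_r, H3. norm. apply E_refl.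
  - eapply E_trans. rewrite app_assoc. apply E_app_r, H2. norm.
    eapply E_trans. apply E_app_l, Hm. rewrite app_assoc.
    eapply E_trans. apply E_app_r, H4. norm. apply E_refl.
Qed.

Lemma act_app w1 w2 x : act c (w1 ++ w2) x = act c w1 (act c w2 x).
Proof. induction w1 as [|[s|s] w1 IH]; simpl; try rewrite IH; reflexivity. Qed.

Lemma act_resp w x y : fe x y -> fe (act c w x) (act c w y).
Proof.
  intros Hxy. induction w as [|[s|s] w IH]; simpl; auto.
  - destruct IH as [a [b [H1 H2]]]. exists a, b. simpl. split; auto.
    apply (E_app_l [s]) in H1. exact H1.
  - destruct IH as [a [b [H1 H2]]].
    set (p := fst (act c w x)) in *. set (q := snd (act c w x)) in *.
    set (p2 := fst (act c w y)) in *. set (q2 := snd (act c w y)) in *.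
    pose proof (Hc [s] p) as C1. set (x1 := fst (c [s] p)) in *. set (y1 := snd (c [s] p)) in *.
    pose proof (Hc [s] p2) as C2. set (x2 := fst (c [s] p2)) in *. set (y2 := snd (c [s] p2)) in *.
    pose proof (Hc y1 a) as M1. set (m1 := fst (c y1 a)) in *. set (n1 := snd (c y1 a)) in *.
    pose proof (Hc y2 (b ++ n1)) as M2. set (m2 := fst (c y2 (b ++ n1))) in *. set (k := snd (c y2 (b ++ n1))) in *.
    assert (K : E (y1 ++ m1 ++ k) (a ++ n1 ++ k)).
    { rewrite !app_assoc. apply E_app_r. auto. }
    exists (m1 ++ k), m2. simpl. split.
    + apply (HL [s]). 
      eapply E_trans. rewrite app_assoc. apply E_app_r, C1. norm.
      eapply E_trans. apply E_app_l, K.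
      eapply E_trans. rewrite app_assoc. apply E_app_r, H1. norm.
      eapply E_trans. apply E_app_l, E_sym, M2.
      eapply E_trans. rewrite app_assoc. apply E_app_r, E_sym, C2. norm. apply E_refl.
    + norm. eapply E_trans. apply E_app_l, K.
      eapply E_trans. rewrite app_assoc. apply E_app_r, H2. norm.
      eapply E_trans. apply E_app_l, E_sym, M2. apply E_refl.
Qed.

Lemma act_pos u x : act c (pos u) x = (u ++ fst x, snd x).
Proof. induction u as [|s u IH]; simpl; [destruct x; reflexivity|]. rewrite IH. reflexivity. Qed.

Lemma act_EP w w' : equivpm R w w' -> forall x, fe (act c w x) (act c w' x).
Proof.
  induction 1; intros x.
  - rewrite !act_app. apply act_resp. rewrite !act_pos.
    exists [], []. simpl. rewrite !app_nil_r. split; [|apply E_refl]. apply E_app_r. apply E_isrel; auto.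
  - rewrite !act_app. apply act_resp. simpl.
    set (r := act c b x). exists [], (snd (c [s] (fst r))). simpl. rewrite !app_nil_r. split.
    + apply (Hc [s]).
    + apply E_refl.
  - rewrite !act_app. apply act_resp. simpl.
    set (r := act c b x). exists [], (snd (c [s] (s :: fst r))). simpl. rewrite !app_nil_r. split.
    + apply (HL [s]). apply (Hc [s]).
    + apply E_refl.
  - apply fe_refl.
  - apply fe_sym; auto.
  - eapply fe_trans; eauto.
Qed.

Lemma act_inv u : forall x q, fe (act c (inv u) (u ++ x, q)) (x, q).
Proof.
  induction u as [|s u IH]; intros x q.
  - apply fe_refl.
  - rewrite inv_cons, act_app. simpl.
    eapply fe_trans; [|apply IH].
    apply act_resp.
    exists [], (snd (c [s] (s :: u ++ x))). simpl. rewrite !app_nil_r. split.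
    + apply (HL [s]). pose proof (Hc [s] (s :: u ++ x)) as H. simpl in H. rewrite <- app_assoc in H. simpl. rewrite <- app_assoc. exact H.
    + apply E_refl.
Qed.

Lemma frac_main v u : equivpm R (pos v ++ inv u) [] -> exists a b, E (v ++ a) b /\ E (u ++ a) b.
Proof.
  intros H. pose proof (act_EP _ _ H ([], [])) as H1.
  rewrite act_app in H1. simpl in H1.
  assert (H2 : fe (act c (inv u) ([], [])) ([], u)).
  { eapply fe_trans; [|apply (act_inv u [] u)]. apply act_resp.
    exists u, []. simpl. rewrite !app_nil_r. split; apply E_refl. }
  apply (act_resp (pos v)) in H2. rewrite !act_pos in H2. simpl in H2.
  apply fe_sym in H2. rewrite act_pos in H1. pose proof (fe_trans _ _ _ H2 H1) as [a [b [Ha Hb]]].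
  simpl in *. rewrite app_nil_r in Ha. eauto.
Qed.

End Act.

End Main.

From Stdlib Require Import IndefiniteDescription.

Theorem proposition7p6 (S : Type) (R : list S -> list S -> Prop) :
  positive_presentation R -> complete R -> cond_C R -> cond_Er R ->
  forall w : list (sletter S),
    (equivpm R w [] <->
       exists u v, rrev R w (pos v ++ inv u) /\ rrev R (inv u ++ pos v) []) /\
    (equivpm R w [] <->
       exists u v, rrev R w (pos v ++ inv u) /\ lrev R (pos v ++ inv u) []).
Proof.
  intros HP [Hrc Hlc] HC HEr w.
  assert (Hex : forall a b, exists p : list S * list S,
             Defs.equiv R (a ++ fst p) (b ++ snd p)).
  { intros a b. destruct (crm S R HEr a b) as [X [Y H]]. exists (X, Y). exact H. }
  set (c := fun a b => proj1_sig (constructive_indefinite_description _ (Hex a b))).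
  assert (Hc : forall a b, Defs.equiv R (a ++ fst (c a b)) (b ++ snd (c a b))).
  { intros a b. unfold c. destruct (constructive_indefinite_description _ (Hex a b)). auto. }
  assert (key : forall u v, equivpm R (pos v ++ inv u) [] -> Defs.equiv R v u).
  { intros u v H. destruct (frac_main S R c Hc (lcancel S R HC Hrc) v u H) as [a [b [H1 H2]]].
    apply (rcancel S R HC Hlc a). eapply E_trans; [apply H1|]. apply E_sym; auto. }
  assert (fwd : equivpm R w [] -> exists u v, rrev R w (pos v ++ inv u) /\ Defs.equiv R u v).
  { intros H. destruct (termination S R HEr Hrc w) as [u [v Hr]].
    exists u, v. split; auto. apply E_sym, key.
    eapply eqpm_trans; [apply eqpm_sym, rrev_EP, Hr|]. auto. }
  split; split.
  - intros H. destruct (fwd H) as [u [v [Hr He]]]. exists u, v. split; auto.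
    destruct (Hrc u v [] [] (E_app_r S R [] _ _ He)) as [u'' [v'' [w0 [Hr2 [H1 H2]]]]].
    apply E_nil in H1; auto. apply E_nil in H2; auto.
    apply app_eq_nil in H1 as [-> _]. apply app_eq_nil in H2 as [-> _]. exact Hr2.
  - intros [u [v [Hr Hr2]]]. apply rrev_nil_E in Hr2.
    eapply eqpm_trans. apply rrev_EP, Hr.
    eapply eqpm_trans. apply (EP_E S R [] (inv u) v u). apply E_sym; auto.
    pose proof (EP_PN S R u [] []) as H. simpl in H. rewrite app_nil_r in H. exact H.
  - intros H. destruct (fwd H) as [u [v [Hr He]]]. exists u, v. split; auto.
    destruct (Hlc v u [] [] (E_sym _ _ _ _ He)) as [u'' [v'' [w0 [Hr2 [H1 H2]]]]].
    apply E_nil in H1; auto. apply E_nil in H2; auto.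
    apply app_eq_nil in H1 as [_ ->]. apply app_eq_nil in H2 as [_ ->]. exact Hr2.
  - intros [u [v [Hr Hl]]]. eapply eqpm_trans. apply rrev_EP, Hr. apply lrev_EP, Hl.
Qed.
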